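(* Consider a rule of the PJR-Exact family run on $(\mathcal{A},k)$, and fix $j$ with $0\le j\le k-1$ such that iterations $1,\dots,j$ are all normal (for $j=0$ this is vacuous). If some candidate $c_1\in C\setminus W_j$ is in an eager state after $j$ iterations, then there exists a candidate $c_2\in C\setminus W_j$ that is in a normal state after $j$ iterations.
   Context: Setting: voters $N=\{1,\dots,n\}$, candidates $C=\{c_1,\dots,c_m\}$, approval ballots $A_i\subseteq C$, $\mathcal{A}=(A_1,\dots,A_n)$, $k$ a positive integer with $k\le|C|$, $q=n/k$, $N_c=\{i: c\in A_i\}$. Convention: $\max\emptyset=0$. Dissatisfaction level: for $W\subseteq C$ with $|W|\le k$ and $c\in C\setminus W$, $\ell(c,W)$ is the largest nonnegative integer $\ell$ with $\ell=\lfloor \frac{k}{n}|\{i\in N: c\in A_i,\ |A_i\cap W|<\ell\}|\rfloor$. PJR-Exact family: iterative procedures selecting $w_1,\dots,w_k$, $W_0=\emptyset$, $W_j=W_{j-1}\cup\{w_j\}$, $w_j\notin W_{j-1}$, with vote fractions $f_i^0=1$, $0\le f_i^j\le f_i^{j-1}$, such that at each iteration $j$: (a) $f_i^j=f_i^{j-1}$ for $i\notin N_{w_j}$; (b) with $s=\sum_{i\in N_{w_j}}f_i^{j-1}$, if $s>q$ then $\sum_{i\in N_{w_j}}(f_i^{j-1}-f_i^j)=q$, and if $s\le q$ then $f_i^j=0$ for all $i\in N_{w_j}$; (c) if some $c\in C\setminus W_{j-1}$ has $\sum_{i\in N_c}f_i^{j-1}\ge q$ then $\sum_{i\in N_{w_j}}f_i^{j-1}\ge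 q$. Notation along a run: $\ell_j(c)=\ell(c,W_j)$ for $c\in C\setminus W_j$; for $c\in C\setminus W_j$ and $i\in N_c$, $\ell_j(i,c)=\max_{c'\in A_i\setminus(W_j\cup\{c\})}\ell_j(c')$; $g_i^j(c)=0$ if $\ell_j(i,c)\le|A_i\cap W_j|$ and $g_i^j(c)=\frac{\ell_j(i,c)-|A_i\cap W_j|-1}{\ell_j(i,c)}$ otherwise. States of $c\in C\setminus W_j$ after $j$ iterations: normal if (1) for each $i\in N_c$ with $\ell_j(i,c)>|A_i\cap W_j|$ we have $f_i^j\ge\frac{\ell_j(i,c)-|A_i\cap W_j|}{\ell_j(i,c)}$, and (2) $\sum_{i\in N_c}(f_i^j-g_i^j(c))\ge q$; starving if (1) fails; eager if not starving, $\sum_{i\in N_c}f_i^j\ge q$ and $\sum_{i\in N_c}(f_i^j-g_i^j(c))<q$; insufficiently supported if not starving and $\sum_{i\in N_c}f_i^j<q$. Normal iteration: iteration $j$ ($1\le j\le k$) is normal if $w_j$ is in normal state after $j-1$ iterations and, for each $i\in N_{w_j}$ with $\ell_{j-1}(i,w_j)>|A_i\cap W_{j-1}|$, $f_i^j\ge\frac{\ell_{j-1}(i,w_j)-|A_i\cap W_j|}{\ell_{j-1}(i,w_j)}$. *)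

(* Defs.v *)
From HB Require Import structures.
From mathcomp Require Import all_boot all_order all_algebra.
Set Implicit Arguments. Unset Strict Implicit. Unset Printing Implicit Defensive.
Import Order.TTheory GRing.Theory Num.Theory.

Section PJR.
Variables (n : nat) (C : finType) (A : 'I_n -> {set C}) (k : nat).

Definition Nc (c : C) : {set 'I_n} := [set i | c \in A i].

Definition quota : rat := (n%:R / k%:R)%R.

Definition dcount (W : {set C}) (c : C) (l : nat) : nat :=
  #|[set i | (c \in A i) && (#|A i :&: W| < l)]|.

Definition dfix (W : {set C}) (c : C) (l : nat) : bool :=
  l == (k * dcount W c l) %/ n.

(* Dissatisfaction level: the largest l with dfix W c l.  Every solution is
   at most k (as dcount <= n), and l = 0 is always a solution, so the max over
   l <= k is the largest solution. *)
Definition dlevel (W : {set C}) (c : C) : nat :=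
  \max_(l < k.+1 | dfix W c l) (l : nat).

(* Run data: w j is the j-th selected candidate (j = 1..k),
   f j i is f_i^j. *)
Variables (w : nat -> C) (f : nat -> 'I_n -> rat).

Definition Wset (j : nat) : {set C} := [set w (nat_of_ord t).+1 | t : 'I_j].

Definition lvl (j : nat) (c : C) : nat := dlevel (Wset j) c.

(* ell_j(i,c) = max_{c' in A_i \ (W_j ∪ {c})} ell_j(c'), max of empty = 0 *)
Definition lvl_i (j : nat) (i : 'I_n) (c : C) : nat :=
  \max_(c' in A i :\: (Wset j :|: [set c])) lvl j c'.

Definition sat (j : nat) (i : 'I_n) : nat := #|A i :&: Wset j|.

Definition gfun (j : nat) (i : 'I_n) (c : C) : rat :=
  if lvl_i j i c <= sat j i then 0%R
  else (((lvl_i j i c)%:R - (sat j i)%:R - 1) / (lvl_i j i c)%:R)%R.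

Definition cond1 (j : nat) (c : C) : Prop :=
  forall i : 'I_n, i \in Nc c -> sat j i < lvl_i j i c ->
    ((((lvl_i j i c)%:R - (sat j i)%:R) / (lvl_i j i c)%:R) <= f j i)%R.

Definition normal_state (j : nat) (c : C) : Prop :=
  cond1 j c /\ (quota <= \sum_(i in Nc c) (f j i - gfun j i c))%R.

Definition starving_state (j : nat) (c : C) : Prop := ~ cond1 j c.

Definition eager_state (j : nat) (c : C) : Prop :=
  cond1 j c /\ (quota <= \sum_(i in Nc c) f j i)%R /\
  (\sum_(i in Nc c) (f j i - gfun j i c) < quota)%R.

Definition insuff_state (j : nat) (c : C) : Prop :=
  cond1 j c /\ (\sum_(i in Nc c) f j i < quota)%R.

Definition normal_iteration (j : nat) : Prop :=
  normal_state j.-1 (w j) /\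
  forall i : 'I_n, i \in Nc (w j) -> sat j.-1 i < lvl_i j.-1 i (w j) ->
    ((((lvl_i j.-1 i (w j))%:R - (sat j i)%:R) / (lvl_i j.-1 i (w j))%:R)
       <= f j i)%R.

Definition PJR_exact_run : Prop :=
  (forall i, f 0 i = 1%R) /\
  forall j, 1 <= j <= k ->
    [/\ w j \notin Wset j.-1,
        (forall i, (0 <= f j i)%R /\ (f j i <= f j.-1 i)%R),
        (forall i, i \notin Nc (w j) -> f j i = f j.-1 i),
        ((quota < \sum_(i in Nc (w j)) f j.-1 i)%R ->
           (\sum_(i in Nc (w j)) (f j.-1 i - f j i))%R = quota) /\
        (((\sum_(i in Nc (w j)) f j.-1 i)%R <= quota)%R ->
           forall i, i \in Nc (w j) -> f j i = 0%R)
      & (exists c, c \notin Wset j.-1 /\ (quota <= \sum_(i in Nc c) f j.-1 i)%R) ->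
           (quota <= \sum_(i in Nc (w j)) f j.-1 i)%R].

End PJR.

(* Main.v *)
Require Import Defs.
From HB Require Import structures.
From mathcomp Require Import all_boot all_order all_algebra.
From mathcomp Require Import ring lra zify.
Import Order.TTheory GRing.Theory Num.Theory.
Set Implicit Arguments. Unset Strict Implicit. Unset Printing Implicit Defensive.

Section RatLemmas.
Local Open Scope ring_scope.

Lemma R1 (a b s : nat) : (0 < a)%N -> (a <= b)%N ->
  ((a%:R - s%:R) / a%:R <= (b%:R - s%:R) / b%:R :> rat).
Proof.
move=> a0 ab.
have ha : (0 : rat) < a%:R by rewrite ltr0n.
have hb : (0 : rat) < b%:R by rewrite ltr0n (leq_trans a0 ab).
have hab : (a%:R : rat) <= b%:R by rewrite ler_nat.
have hs : (0 : rat) <= s%:R by rewrite ler0n.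
rewrite ler_pdivrMr // mulrAC ler_pdivlMr //.
nra.
Qed.

Lemma R2 (L s : nat) : (s < L)%N -> ((L%:R)^-1 <= (L%:R - s%:R) / L%:R :> rat).
Proof.
move=> sL.
have hL : (0 : rat) < L%:R by rewrite ltr0n (leq_ltn_trans (leq0n s) sL).
have hsL : (s%:R + 1 : rat) <= L%:R by rewrite natr1 ler_nat.
rewrite ler_pdivlMr // mulVf ?gt_eqF //. lra.
Qed.

Lemma R3 (L Li s : nat) : (s < Li)%N -> (Li <= L)%N ->
  ((L%:R)^-1 <= (L%:R - s%:R) / L%:R - (Li%:R - s%:R - 1) / Li%:R :> rat).
Proof.
move=> sLi LiL.
have hLi : (0 : rat) < Li%:R by rewrite ltr0n (leq_ltn_trans (leq0n s) sLi).
have h1 := @R1 Li L s (leq_ltn_trans (leq0n s) sLi) LiL.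
have -> : (Li%:R - s%:R - 1) / Li%:R = (Li%:R - s%:R) / Li%:R - (Li%:R)^-1 :> rat.
  rewrite mulrBl mul1r. done.
have : (L%:R : rat)^-1 <= (Li%:R)^-1.
  rewrite lef_pV2 ?ler_nat // ?posrE //. by rewrite ltr0n (leq_trans _ LiL) // (leq_ltn_trans (leq0n s) sLi).
lra.
Qed.

End RatLemmas.

Lemma dcount_le_n n (C : finType) (A : 'I_n -> {set C}) (W : {set C}) (c : C) l : dcount A W c l <= n.
Proof. by rewrite /dcount (leq_trans (max_card _)) // card_ord. Qed.

Lemma dcount_monoW n (C : finType) (A : 'I_n -> {set C}) (W W' : {set C}) (c : C) l :
  W \subset W' -> dcount A W' c l <= dcount A W c l.
Proof.
move=> sW; rewrite /dcount; apply: subset_leq_card; apply/subsetP=> i.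
rewrite !inE => /andP[-> h] /=.
by apply: leq_ltn_trans h; apply: subset_leq_card; apply: setIS.
Qed.

Lemma dcount_monol n (C : finType) (A : 'I_n -> {set C}) (W : {set C}) (c : C) l l' :
  l <= l' -> dcount A W c l <= dcount A W c l'.
Proof.
move=> ll; rewrite /dcount; apply: subset_leq_card; apply/subsetP=> i.
rewrite !inE => /andP[-> h] /=. exact: leq_trans h ll.
Qed.

Lemma gmono n (C : finType) (A : 'I_n -> {set C}) k (W : {set C}) (c : C) l l' :
  l <= l' -> k * dcount A W c l %/ n <= k * dcount A W c l' %/ n.
Proof. by move=> ll; rewrite leq_div2r // leq_mul2l dcount_monol ?orbT. Qed.

Lemma gle_k n (C : finType) (A : 'I_n -> {set C}) k (W : {set C}) (c : C) l :
  0 < n -> k * dcount A W c l %/ n <= k.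
Proof.
move=> n0; apply: (leq_trans (leq_div2r n (leq_mul (leqnn k) (dcount_le_n A W c l)))).
  by rewrite mulnK.
Qed.

Lemma prefix_le_dlevel n (C : finType) (A : 'I_n -> {set C}) k (W : {set C}) (c : C) l :
  0 < n -> l <= k * dcount A W c l %/ n -> l <= dlevel A k W c.
Proof.
move=> n0.
have main : forall N x, k - x < N -> x <= k * dcount A W c x %/ n -> x <= dlevel A k W c.
  elim=> [//|N IH] x hN hx.
  have xk : x <= k := leq_trans hx (gle_k _ _ _ _ _ n0).
  case: (ltngtP x (k * dcount A W c x %/ n)) hx => // [lt _|eq _].
  - apply: ltnW; apply: (leq_trans lt); apply: IH.
      have := gle_k A k W c x n0. lia.
    exact: gmono (ltnW lt).
  - rewrite /dlevel. have xk1 : x < k.+1 by [].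
    have := @leq_bigmax_cond _ (fun l : 'I_k.+1 => dfix A k W c l) (fun l : 'I_k.+1 => nat_of_ord l) (Ordinal xk1).
    by apply; rewrite /dfix /= -eq.
by move=> h; apply: (main (k - l).+1).
Qed.

Lemma dlevel_prefix n (C : finType) (A : 'I_n -> {set C}) k (W : {set C}) (c : C) :
  dlevel A k W c <= k * dcount A W c (dlevel A k W c) %/ n.
Proof.
rewrite /dlevel; apply: (big_ind (fun x => x <= k * dcount A W c x %/ n)) => //.
- move=> x y hx hy; rewrite geq_max; apply/andP; split.
    by apply: (leq_trans hx); apply: gmono; rewrite leq_maxl.
  by apply: (leq_trans hy); apply: gmono; rewrite leq_maxr.
- by move=> i /eqP {1}->.
Qed.


Lemma Wset_sub (C : finType) (w : nat -> C) t t' : t <= t' -> Wset w t \subset Wset w t'.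
Proof.
move=> tt; apply/subsetP => x /imsetP[s _ ->].
by apply/imsetP; exists (widen_ord tt s).
Qed.

Lemma Wset_last (C : finType) (w : nat -> C) t : w t.+1 \in Wset w t.+1.
Proof. by apply/imsetP; exists ord_max. Qed.

Lemma Wset_S (C : finType) (w : nat -> C) t x :
  x \in Wset w t.+1 -> (x \in Wset w t) || (x == w t.+1).
Proof.
case/imsetP => s _ ->.
case: (ltngtP s t) => [lt|gt|eq].
- by apply/orP; left; apply/imsetP; exists (Ordinal lt).
- by have := ltn_ord s; lia.
- by rewrite eq eqxx orbT.
Qed.

Lemma sat_mono n (C : finType) (A : 'I_n -> {set C}) (w : nat -> C) t t' i :
  t <= t' -> sat A w t i <= sat A w t' i.
Proof. by move=> tt; apply: subset_leq_card; apply: setIS; apply: Wset_sub. Qed.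

Lemma sat_same n (C : finType) (A : 'I_n -> {set C}) (w : nat -> C) t i :
  w t.+1 \notin A i -> sat A w t.+1 i = sat A w t i.
Proof.
move=> hw; apply/eqP; rewrite eqn_leq [X in _ && X]sat_mono // andbT.
apply: subset_leq_card; apply/subsetP => x; rewrite !inE => /andP[xa /Wset_S /orP[->|/eqP e]].
  by rewrite xa.
by move: hw; rewrite -e xa.
Qed.


Lemma pjr_invariant (n : nat) (C : finType) (A : 'I_n -> {set C}) (k : nat)
    (w : nat -> C) (f : nat -> 'I_n -> rat) :
  0 < n -> 0 < k -> PJR_exact_run A k w f ->
  forall j : nat, j <= k - 1 ->
  (forall t : nat, 1 <= t <= j -> normal_iteration A k w f t) ->
  forall t, t <= j -> forall i c' l, c' \in A i -> c' \notin Wset w t ->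
    sat A w t i < l -> l <= k * dcount A (Wset w t) c' l %/ n ->
    ((l%:R - (sat A w t i)%:R) / l%:R <= f t i)%R.
Proof.
move=> n0 k0 [f0 runj] j jk hnorm.
elim=> [|t IH] ht i c' l ci cn sl pre.
  rewrite f0.
  have hl : (0 < l%:R :> rat)%R by rewrite ltr0n; lia.
  have hs : (0 <= (sat A w 0 i)%:R :> rat)%R by rewrite ler0n.
  rewrite ler_pdivrMr // mul1r. lra.
have tk : 1 <= t.+1 <= k by lia.
have [_ _ Hnot _ _] := runj t.+1 tk.
have [_ Hni] := hnorm t.+1 (ltac:(lia)).
rewrite /= in Hnot Hni.
have Wsub : Wset w t \subset Wset w t.+1 by apply: Wset_sub.
have cn' : c' \notin Wset w t.
  by apply/negP => h; move/negP: cn; apply; apply: (subsetP Wsub).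
have pre' : l <= k * dcount A (Wset w t) c' l %/ n.
  apply: (leq_trans pre); apply: leq_div2r; apply: leq_mul => //.
  exact: dcount_monoW.
case: (boolP (i \in Nc A (w t.+1))) => hi; last first.
  have hw : w t.+1 \notin A i by move: hi; rewrite /Nc inE.
  rewrite (Hnot i hi) (sat_same hw).
  rewrite (sat_same hw) in sl.
  apply: (IH _ i c') => //; lia.
have hlvl : lvl A k w t c' <= lvl_i A k w t i (w t.+1).
  rewrite /lvl_i.
  apply: (@leq_bigmax_cond _ (fun c => c \in A i :\: (Wset w t :|: [set w t.+1])) (lvl A k w t) c').
  rewrite !inE ci andbT negb_or cn' /=.
  by apply/eqP => e; move/negP: cn; apply; rewrite e Wset_last.
have l_le : l <= lvl A k w t c' by apply: prefix_le_dlevel.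
have st : sat A w t i <= sat A w t.+1 i by apply: sat_mono.
have := Hni i hi (ltac:(lia)).
apply: le_trans.
apply: R1; lia.
Qed.


Theorem mainTheorem6 (n : nat) (C : finType) (A : 'I_n -> {set C}) (k : nat)
    (w : nat -> C) (f : nat -> 'I_n -> rat) :
  0 < n -> 0 < k -> k <= #|C| ->
  PJR_exact_run A k w f ->
  forall j : nat, j <= k - 1 ->
  (forall t : nat, 1 <= t <= j -> normal_iteration A k w f t) ->
  forall c1 : C, c1 \notin Wset w j -> eager_state A k w f j c1 ->
  exists c2 : C, c2 \notin Wset w j /\ normal_state A k w f j c2.
Proof.
move=> n0 k0 kC run j jk hnorm c1 c1n [c1cond [c1sum c1lt]].
have inv := pjr_invariant n0 k0 run jk hnorm (leqnn j).
have [f0 runj] := run.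
have [cs csn csmax] := @arg_maxnP _ c1 (fun c => c \notin Wset w j) (lvl A k w j) c1n.
set L := lvl A k w j cs.
have HLi : forall i c, lvl_i A k w j i c <= L.
  move=> i c; rewrite /lvl_i; apply/bigmax_leqP => c'.
  rewrite !inE negb_or => /andP[/andP[h _] _]; exact: csmax.
have fpos : forall i, (0 <= f j i)%R.
  move=> i; case: j jk hnorm c1n c1cond c1sum c1lt inv csn csmax L HLi => [|j] *.
    by rewrite f0.
  by have [_ /(_ i) [] ] := runj j.+1 (ltac:(lia)).
have L0 : 0 < L.
  case: (posnP L) => // L0; exfalso.
  have e : (\sum_(i in Nc A c1) (f j i - gfun A k w j i c1) = \sum_(i in Nc A c1) f j i)%R.
    apply: eq_bigr => i _; rewrite /gfun.
    have := HLi i c1; rewrite L0 leqn0 => /eqP ->.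
    by rewrite leq0n subr0.
  by move: c1lt; rewrite e ltNge c1sum.
have pre : L <= k * dcount A (Wset w j) cs L %/ n by apply: dlevel_prefix.
have hinv : forall i, cs \in A i -> sat A w j i < L ->
    ((L%:R - (sat A w j i)%:R) / L%:R <= f j i)%R.
  by move=> i ci hs; apply: (inv i cs).
exists cs; split => //; split.
  move=> i; rewrite inE => ci hs.
  have hL := HLi i cs.
  apply: le_trans (hinv i ci (ltac:(lia))).
  apply: R1; lia.
have term : forall i, i \in Nc A cs ->
    ((if (sat A w j i < L)%N then (L%:R)^-1 else 0) <= f j i - gfun A k w j i cs :> rat)%R.
  move=> i; rewrite inE => ci; rewrite /gfun.
  have hL := HLi i cs.
  case: (leqP (lvl_i A k w j i cs) (sat A w j i)) => hLi.
    rewrite subr0; case: ifP => hs; last exact: fpos.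
    exact: le_trans (@R2 L (sat A w j i) hs) (hinv i ci hs).
  rewrite ifT; last lia.
  have h1 := hinv i ci (ltac:(lia)).
  have h3 := @R3 L (lvl_i A k w j i cs) (sat A w j i) hLi hL.
  lra.
apply: le_trans (ler_sum _ term).
rewrite -big_mkcondr /=.
rewrite (eq_bigl (fun i => i \in [set i | (cs \in A i) && (#|A i :&: Wset w j| < L)])); last first.
  by move=> i; rewrite !inE.
rewrite sumr_const.
have hd : L * n <= k * dcount A (Wset w j) cs L by rewrite -leq_divRL.
move: hd; rewrite /dcount; set d := #|_| => hd.
have hdR : ((L * n)%:R <= (k * d)%:R :> rat)%R by rewrite ler_nat.
rewrite !natrM in hdR.
have hL : (0 < L%:R :> rat)%R by rewrite ltr0n.
have hk : (0 < k%:R :> rat)%R by rewrite ltr0n.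
rewrite /quota -[(_ *+ d)%R]mulr_natr ler_pdivrMr // -mulrA mulrC ler_pdivlMr //.
lra.
Qed.
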